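(* For every integer $n\ge1$ and every $w>0$ with $w\ne1$, $$F_n(w)\le\frac{n}{2\sqrt{w}\,|w-1|}.$$
   Context: For $w>0$ and integer $n\ge1$ let $a_n(w)=\sum_{j=0}^n w^j$, $b_n(w)=\sum_{j=1}^n jw^j$, $c_n(w)=\sum_{j=0}^n j^2w^j$, and $$F_n(w)=\frac{1}{2\sqrt{w}}\sqrt{\frac{c_n(w)}{a_n(w)}}\sqrt{\frac{a_n(w)c_n(w)-b_n(w)^2}{w\,a_n(w)^2}}.$$ *)

(* Defs.v *)
From Stdlib Require Import Reals.
Open Scope R_scope.

Definition a_n (n : nat) (w : R) : R := sum_f_R0 (fun j => w ^ j) n.
(* b_n(w) = sum_{j=1}^n j w^j  (the j = 0 term vanishes) *)
Definition b_n (n : nat) (w : R) : R := sum_f_R0 (fun j => INR j * w ^ j) n.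
Definition c_n (n : nat) (w : R) : R := sum_f_R0 (fun j => (INR j)^2 * w ^ j) n.

Definition F_n (n : nat) (w : R) : R :=
  / (2 * sqrt w) * sqrt (c_n n w / a_n n w)
  * sqrt ((a_n n w * c_n n w - (b_n n w)^2) / (w * (a_n n w)^2)).

(* Main.v *)
Require Import Defs.
From Stdlib Require Import Reals Lra Psatz.
Open Scope R_scope.

Lemma cf_a n w : a_n n w * (1 - w) = 1 - w ^ (S n).
Proof.
  induction n as [|n IH]; unfold a_n in *; cbn [sum_f_R0].
  - simpl; ring.
  - rewrite Rmult_plus_distr_r, IH. simpl pow. ring.
Qed.

Lemma cf_b n w : b_n n w * (1 - w)^2 =
  w - w ^ (S n) * (w + (INR n + 1) * (1 - w)).
Proof.
  induction n as [|n IH]; unfold b_n in *; cbn [sum_f_R0].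
  - simpl; ring.
  - rewrite Rmult_plus_distr_r, IH. rewrite ?S_INR. simpl pow. ring.
Qed.

Lemma cf_c n w : c_n n w * (1 - w)^3 =
  w * (1 + w) - w ^ (S n) * (w * (1 + w) + 2 * (INR n + 1) * w * (1 - w)
     + (INR n + 1)^2 * (1 - w)^2).
Proof.
  induction n as [|n IH]; unfold c_n in *; cbn [sum_f_R0].
  - simpl; ring.
  - rewrite Rmult_plus_distr_r, IH. rewrite ?S_INR. simpl pow. ring.
Qed.

Lemma var_id n w :
  (a_n n w * c_n n w - (b_n n w)^2) * (1 - w)^4 =
  w * (a_n n w * (1 - w))^2 - (INR n + 1)^2 * w ^ (S n) * (1 - w)^2.
Proof.
  assert (E : (a_n n w * c_n n w - (b_n n w)^2) * (1 - w)^4 =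
     (a_n n w * (1 - w)) * (c_n n w * (1 - w)^3) - (b_n n w * (1-w)^2)^2) by ring.
  rewrite E, cf_a, cf_b, cf_c. ring.
Qed.

Lemma a_pos n w : 0 < w -> 0 < a_n n w.
Proof.
  intros Hw; induction n as [|n IH]; unfold a_n in *; cbn [sum_f_R0].
  - simpl; lra.
  - pose proof (pow_lt w (S n) Hw); lra.
Qed.

Lemma c_bounds n w : 0 < w -> 0 <= c_n n w <= (INR n)^2 * a_n n w.
Proof.
  intros Hw; split.
  - induction n as [|n IH]; unfold c_n in *; cbn [sum_f_R0].
    + simpl; lra.
    + pose proof (pow_lt w (S n) Hw). pose proof (pow2_ge_0 (INR (S n))). nra.
  - unfold c_n, a_n. rewrite scal_sum.
    apply sum_Rle. intros j Hj.
    pose proof (pow_lt w j Hw).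
    assert (0 <= INR j <= INR n) by (split; [apply pos_INR| apply le_INR; lia]).
    assert (INR j ^ 2 <= INR n ^ 2) by (simpl; nra). rewrite (Rmult_comm (w ^ j)). apply Rmult_le_compat_r; lra.
Qed.

Theorem mainTheorem11 (n : nat) (w : R) :
  (1 <= n)%nat -> 0 < w -> w <> 1 ->
  F_n n w <= INR n / (2 * sqrt w * Rabs (w - 1)).
Proof.
  intros Hn Hw Hw1.
  pose proof (a_pos n w Hw) as Ha.
  pose proof (c_bounds n w Hw) as [Hc0 Hc1].
  pose proof (var_id n w) as Hv.
  set (a := a_n n w) in *. set (b := b_n n w) in *. set (c := c_n n w) in *.
  assert (Hr : 0 < Rabs (w - 1)) by (apply Rabs_pos_lt; lra).
  assert (Hs : 0 < sqrt w) by (apply sqrt_lt_R0; lra).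
  assert (Hd : 0 < (1 - w)^2) by (destruct (Rlt_or_le w 1); nra).
  pose proof (pow_lt w (S n) Hw) as Hp.
  set (D := a * c - b^2) in *.
  assert (HD : D * (1 - w)^2 <= w * a^2).
  { apply Rmult_le_reg_r with ((1 - w)^2); [exact Hd|].
    replace (D * (1 - w) ^ 2 * (1 - w) ^ 2) with (D * (1 - w)^4) by ring.
    rewrite Hv.
    assert (0 <= (INR n + 1)^2 * w ^ S n * (1 - w)^2).
    { apply Rmult_le_pos; [apply Rmult_le_pos|]; try apply pow2_ge_0; lra. }
    replace (w * (a * (1 - w)) ^ 2) with (w * a ^ 2 * (1 - w) ^ 2) by ring. lra. }
  assert (Hwa : 0 < w * a^2) by (apply Rmult_lt_0_compat; [lra| apply pow_lt; lra]).
  set (V := D / (w * a^2)).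
  assert (HV : V * (w - 1)^2 <= 1).
  { unfold V. replace (D / (w * a ^ 2) * (w - 1) ^ 2) with (D * (1 - w)^2 / (w * a^2))
      by (field; split; lra).
    apply Rmult_le_reg_r with (w * a^2); [lra|].
    unfold Rdiv. rewrite Rmult_assoc, Rinv_l by lra. lra. }
  assert (HX : sqrt (c / a) <= INR n).
  { rewrite <- (sqrt_pow2 (INR n)) by apply pos_INR.
    apply sqrt_le_1_alt. apply Rmult_le_reg_r with a; [exact Ha|].
    unfold Rdiv. rewrite Rmult_assoc, Rinv_l by lra. lra. }
  assert (HY : sqrt V * Rabs (w - 1) <= 1).
  { destruct (Rle_or_lt 0 V) as [HV0|HV0].
    - rewrite <- sqrt_Rsqr_abs, <- sqrt_mult_alt by exact HV0.
      apply Rle_trans with (sqrt 1); [|rewrite sqrt_1; lra]. apply sqrt_le_1_alt. unfold Rsqr. replace (V * ((w - 1) * (w - 1))) with (V * (w - 1) ^ 2) by ring. exact HV.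
    - rewrite (sqrt_neg_0 V) by lra. lra. }
  unfold F_n. fold a b c. fold D. fold V.
  pose proof (sqrt_pos (c / a)). pose proof (sqrt_pos V).
  set (X := sqrt (c / a)) in *. set (Y := sqrt V) in *.
  set (r := Rabs (w - 1)) in *. set (s := 2 * sqrt w) in *.
  unfold Rdiv. rewrite (Rinv_mult s r).
  assert (Hs' : 0 < / s) by (apply Rinv_0_lt_compat; unfold s; lra).
  assert (Hri : / r * r = 1) by (apply Rinv_l; lra).
  assert (Hri' : 0 < / r) by (apply Rinv_0_lt_compat; lra).
  assert (XY : X * Y <= INR n * / r).
  { replace (X * Y) with (X * (Y * r) * / r) by (field; lra).
    apply Rmult_le_compat_r; [lra|]. nra. }
  replace (/ s * X * Y) with (/ s * (X * Y)) by ring.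
  replace (INR n * (/ s * / r)) with (/ s * (INR n * / r)) by ring.
  apply Rmult_le_compat_l; lra.
Qed.
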